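(* Let $P$ be a subsemigroup of a discrete group $Q$ and let $(X,P,T)$ be a directed locally compact semigroup action. Endow the semidirect product groupoid $G(X,P,T)$ with the topology $\mathcal T$ generated by the sets $Z(U,m,n,V)$. Then (a) $G(X,P,T)$ is an étale locally compact Hausdorff groupoid; (b) the canonical cocycle $c:G(X,P,T)\to Q$, $c(x,q,y)=q$, is continuous.
   Context: A right (partial) action of $P$ (identity $e$) on $X$: a subset $X*P\subset X\times P$ and $(x,m)\mapsto x\cdot m$ with $(x,e)\in X*P$, $x\cdot e=x$, and $(x,mn)\in X*P$ iff $(x,m)\in X*P$ and $(x\cdot m,n)\in X*P$, in which case $(x\cdot m)\cdot n=x\cdot(mn)$. $U(m)=\{x:(x,m)\in X*P\}$, $V(m)=\{x\cdot m\}$, $T_m:U(m)\to V(m)$, $T_mx=x\cdot m$; $m\le n$ iff $n=mp$ for some $p\in P$. Directed: whenever $U(m)\cap U(n)\ne\emptyset$ there is $r\ge m,n$ with $U(m)\cap U(n)=U(r)$. Locally compact: $X$ locally compact Hausdorff, $Q$ discrete, $U(m),V(m)$ open and $T_m$ a local homeomorphism. $G(X,P,T)=\{(x,q,y)\in X\times Q\times X: \exists m,n\in P, q=mn^{-1}, x\in U(m), y\in U(n), x\cdot m=y\cdot n\}$ with $(x,q,y)(y,q',z)=(x,qq',z)$, $(x,q,y)^{-1}=(y,q^{-1},x)$, unit space $X$ via $x\mapsto(x,e,x)$. For $m,n\in P$ and $U,V\subset X$ open, $Z(U,m,n,V)=\{(x,mn^{-1},y)\in G(X,P,T): x\in U,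 y\in V, x\cdot m=y\cdot n\}$; these sets form a basis for $\mathcal T$. *)

(* Defs.v *)
From HB Require Import structures.
From mathcomp Require Import all_boot all_classical.
From mathcomp Require Import topology.


Local Open Scope classical_set_scope.

Record group_str (Q : Type) := GroupStr {
  gmul : Q -> Q -> Q;
  ginv : Q -> Q;
  gone : Q;
  gmulA : forall a b c, gmul a (gmul b c) = gmul (gmul a b) c;
  gmul1l : forall a, gmul gone a = a;
  gmul1r : forall a, gmul a gone = a;
  gmulVl : forall a, gmul (ginv a) a = gone;
  gmulVr : forall a, gmul a (ginv a) = gone }.
Arguments gmul {Q} g _ _.
Arguments ginv {Q} g _.
Arguments gone {Q} g.

Definition subsemigroup_with_e {Q : Type} (GQ : group_str Q) (P : set Q) :=
  P (gone GQ) /\ forall m n, P m -> P n -> P (gmul GQ m n).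

(** Data of a right partial action of P on X:
    [adom x m] means (x,m) \in X*P, [act x m] is x.m. *)
Record sg_action (X Q : Type) := SgAction {
  sP : set Q;
  adom : X -> Q -> Prop;
  act : X -> Q -> X }.
Arguments sP {X Q} s _.
Arguments adom {X Q} s _ _.
Arguments act {X Q} s _ _.


Definition U_ {X Q : Type} (A : sg_action X Q) (m : Q) : set X :=
  [set x | adom A x m].
Definition V_ {X Q : Type} (A : sg_action X Q) (m : Q) : set X :=
  (fun x => act A x m) @` U_ A m.

Definition ple {X Q : Type} (GQ : group_str Q) (A : sg_action X Q) (m n : Q) :=
  exists2 p, sP A p & n = gmul GQ m p.

Definition is_right_action {X Q : Type} (GQ : group_str Q) (A : sg_action X Q) :=
  (forall x, adom A x (gone GQ) /\ act A x (gone GQ) = x) /\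
  (forall x m n, sP A m -> sP A n ->
     (adom A x (gmul GQ m n) <-> (adom A x m /\ adom A (act A x m) n)) /\
     (adom A x (gmul GQ m n) ->
        act A (act A x m) n = act A x (gmul GQ m n))).

Definition directed_action {X Q : Type} (GQ : group_str Q) (A : sg_action X Q) :=
  forall m n, sP A m -> sP A n -> U_ A m `&` U_ A n !=set0 ->
    exists r, [/\ sP A r, ple GQ A m r, ple GQ A n r &
                  U_ A m `&` U_ A n = U_ A r].

Definition local_homeo_on (X : topologicalType) (D : set X) (f : X -> X) :=
  forall x, D x -> exists W : set X,
    [/\ open W /\ W x, W `<=` D,
        {in W &, injective f},
        {within W, continuous f} &
        forall O, open O -> O `<=` W -> open (f @` O)].

(** locally compact action: X locally compact Hausdorff, U(m), V(m) open,
    T_m : U(m) -> V(m) a local homeomorphism (Q is discrete: no topology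
    data needed on Q). *)
Definition lc_action {X : topologicalType} {Q : Type} (A : sg_action X Q) :=
  [/\ hausdorff_space X, locally_compact [set: X] &
      forall m, sP A m ->
        [/\ open (U_ A m), open (V_ A m) &
            @local_homeo_on X (U_ A m) (fun x : X => act A x m)]].

Definition inG {X Q : Type} (GQ : group_str Q) (A : sg_action X Q)
    (x : X) (q : Q) (y : X) :=
  exists m n, [/\ sP A m /\ sP A n, q = gmul GQ m (ginv GQ n),
                  adom A x m, adom A y n & act A x m = act A y n].

Record gelt {X Q : Type} (GQ : group_str Q) (A : sg_action X Q) := GElt {
  gx : X; gq : Q; gy : X; gin : inG GQ A gx gq gy }.
Arguments GElt {X Q GQ A gx gq gy} _.
Arguments gx {X Q GQ A} _.
Arguments gq {X Q GQ A} _.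
Arguments gy {X Q GQ A} _.

HB.instance Definition _ {X Q : Type} (GQ : group_str Q) (A : sg_action X Q) :=
  gen_eqMixin (gelt GQ A).
HB.instance Definition _ {X Q : Type} (GQ : group_str Q) (A : sg_action X Q) :=
  gen_choiceMixin (gelt GQ A).

Definition Zset {X Q : Type} (GQ : group_str Q) (A : sg_action X Q)
    (U : set X) (m n : Q) (V : set X) : set (gelt GQ A) :=
  [set g | [/\ U (gx g) /\ V (gy g), gq g = gmul GQ m (ginv GQ n),
               adom A (gx g) m, adom A (gy g) n &
               act A (gx g) m = act A (gy g) n]].

Definition Zsets {X : topologicalType} {Q : Type} (GQ : group_str Q)
    (A : sg_action X Q) : set (set (gelt GQ A)) :=
  [set Z | exists (U : set X) (m n : Q) (V : set X),
     [/\ open U, open V, sP A m, sP A n & Z = Zset GQ A U m n V]].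

Definition Gpd {X : topologicalType} {Q : Type} (GQ : group_str Q)
  (A : sg_action X Q) := gelt GQ A.

HB.instance Definition _ {X : topologicalType} {Q : Type} (GQ : group_str Q)
    (A : sg_action X Q) := Choice.on (Gpd GQ A).
HB.instance Definition _ {X : topologicalType} {Q : Type} (GQ : group_str Q)
    (A : sg_action X Q) :=
  @isSubBaseTopological.Build (Gpd GQ A) (set (gelt GQ A)) (Zsets GQ A) id.

(** Since membership of the result in G(X,P,T) is part of what has to be
    shown, the operations are defined classically (returning a dummy value
    when the result is not in G(X,P,T)); the theorem asserts separately that
    the results are always in G(X,P,T), so these are the genuine operations. *)
Definition gpd_mul {X : topologicalType} {Q : Type} (GQ : group_str Q)
    (A : sg_action X Q) (g h : Gpd GQ A) : Gpd GQ A :=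
  match pselect (inG GQ A (gx g) (gmul GQ (gq g) (gq h)) (gy h)) with
  | left H => GElt H
  | right _ => g
  end.

Definition gpd_inv {X : topologicalType} {Q : Type} (GQ : group_str Q)
    (A : sg_action X Q) (g : Gpd GQ A) : Gpd GQ A :=
  match pselect (inG GQ A (gy g) (ginv GQ (gq g)) (gx g)) with
  | left H => GElt H
  | right _ => g
  end.

Definition gpd_comp {X : topologicalType} {Q : Type} (GQ : group_str Q)
    (A : sg_action X Q) (g h : Gpd GQ A) : Prop := gy g = gx h.

Definition cocycle {X : topologicalType} {Q : Type} (GQ : group_str Q)
    (A : sg_action X Q) (g : Gpd GQ A) : Q := gq g.

(** A groupoid is given by its composability relation [comp], a
    multiplication [mul] (meaningful on composable pairs) and an inversion
    [inv], subject to the usual (Renault) axioms; its unit space is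
    G^(0) = {g g^-1}, range map r(g) = g g^-1. *)
Definition is_groupoid {G : Type} (comp : G -> G -> Prop)
    (mul : G -> G -> G) (inv : G -> G) :=
  [/\ (forall g h k, comp g h -> comp h k ->
          [/\ comp (mul g h) k, comp g (mul h k) &
              mul (mul g h) k = mul g (mul h k)]),
      (forall g, inv (inv g) = g),
      (forall g, comp g (inv g)) &
      (forall g h, comp g h -> mul (inv g) (mul g h) = h /\
                               mul (mul g h) (inv h) = g)].

Definition unit_space {G : Type} (mul : G -> G -> G) (inv : G -> G) : set G :=
  [set u | exists g, u = mul g (inv g)].

Definition rel_open {G : topologicalType} (Y A : set G) :=
  exists2 O, open O & A = O `&` Y.

Definition local_homeo_to {G : topologicalType} (Y : set G) (f : G -> G) :=
  (forall g, Y (f g)) /\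
  forall g, exists W : set G,
    [/\ open W, W g, {in W &, injective f},
        {within W, continuous f} &
        forall O, open O -> O `<=` W -> rel_open Y (f @` O)].

Definition etale_lch_groupoid {G : topologicalType} (comp : G -> G -> Prop)
    (mul : G -> G -> G) (inv : G -> G) :=
  [/\ is_groupoid comp mul inv,
      hausdorff_space G /\ locally_compact [set: G],
      {within [set p : G * G | comp p.1 p.2], continuous (fun p => mul p.1 p.2)},
      continuous inv &
      local_homeo_to (unit_space mul inv) (fun g => mul g (inv g))].

(* Main.v *)
Require Import Defs.
From HB Require Import structures.
From mathcomp Require Import all_boot all_classical.
From mathcomp Require Import topology.
Local Open Scope classical_set_scope.

Arguments gmulA {Q g} a b c.
Arguments gmul1l {Q g} a.
Arguments gmul1r {Q g} a.
Arguments gmulVl {Q g} a.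
Arguments gmulVr {Q g} a.

Section Grp.
Context {Q : Type} (GQ : group_str Q).
Local Notation "a ** b" := (gmul GQ a b) (at level 40, left associativity).
Local Notation iv := (ginv GQ).
Local Notation e := (gone GQ).

Lemma gKg a b : iv a ** (a ** b) = b.
Proof. by rewrite gmulA gmulVl gmul1l. Qed.
Lemma gVKg a b : a ** (iv a ** b) = b.
Proof. by rewrite gmulA gmulVr gmul1l. Qed.
Lemma ggK a b : (a ** b) ** iv b = a.
Proof. by rewrite -gmulA gmulVr gmul1r. Qed.
Lemma ggKV a b : (a ** iv b) ** b = a.
Proof. by rewrite -gmulA gmulVl gmul1r. Qed.
Lemma ginv_uniq a b : a ** b = e -> b = iv a.
Proof. by move=> h; rewrite -(gKg a b) h gmul1r. Qed.
Lemma ginvK a : iv (iv a) = a.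
Proof. by rewrite -(ginv_uniq _ _ (gmulVl a)). Qed.
Lemma ginvM a b : iv (a ** b) = iv b ** iv a.
Proof.
apply/esym/ginv_uniq. by rewrite -gmulA (gmulA b) gmulVr gmul1l gmulVr.
Qed.
Lemma ginv1 : iv e = e.
Proof. by apply/esym/ginv_uniq; rewrite gmul1l. Qed.
Lemma mul_sinv m n s : (m ** s) ** iv (n ** s) = m ** iv n.
Proof. by rewrite ginvM gmulA ggK. Qed.
Lemma q_n q m n : q = m ** iv n -> n = iv q ** m.
Proof. by move=> ->; rewrite ginvM ginvK ggKV. Qed.
Lemma mul_inv_e m n : m ** iv n = e -> m = n.
Proof. by move=> h; rewrite -(ggKV m n) h gmul1l. Qed.
End Grp.
Arguments q_n {Q GQ q m n}.
Arguments ginv_uniq {Q GQ a b}.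
Arguments mul_inv_e {Q GQ m n}.

Section Main.
Context (X : topologicalType) (Q : Type) (GQ : group_str Q)
    (A : sg_action X Q)
    (hP : subsemigroup_with_e GQ (sP A))
    (hact : is_right_action GQ A)
    (hdir : directed_action GQ A)
    (hlc : lc_action A).
Local Notation "a ** b" := (gmul GQ a b) (at level 40, left associativity).
Local Notation iv := (ginv GQ).
Local Notation e := (gone GQ).
Local Notation G := (Gpd GQ A).

Lemma Pe : sP A e. Proof. by case: hP. Qed.
Lemma PM m n : sP A m -> sP A n -> sP A (m ** n). Proof. by case: hP => _; apply. Qed.
Lemma adom1 x : adom A x e. Proof. by case: hact => h _; case: (h x). Qed.
Lemma act1 x : act A x e = x. Proof. by case: hact => h _; case: (h x). Qed.
Lemma adomM {x m n} : sP A m -> sP A n ->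
  adom A x (m ** n) <-> (adom A x m /\ adom A (act A x m) n).
Proof. by case: hact => _ h Pm Pn; case: (h x m n Pm Pn). Qed.
Lemma actM {x m n} : sP A m -> sP A n -> adom A x (m ** n) ->
  act A (act A x m) n = act A x (m ** n).
Proof. by case: hact => _ h Pm Pn; case: (h x m n Pm Pn). Qed.

Lemma window {m x} : sP A m -> adom A x m -> exists W : set X,
    [/\ open W /\ W x, W `<=` U_ A m,
        {in W &, injective (fun x : X => act A x m)},
        {within W, continuous (fun x : X => act A x m)} &
        forall O, open O -> O `<=` W -> open ((fun x : X => act A x m) @` O)].
Proof. by move=> Pm xm; case: hlc => _ _ /(_ m Pm) [_ _ lh]; apply: lh. Qed.

Lemma cont_at {m x} : sP A m -> adom A x m ->
  {for x, continuous (fun x : X => act A x m)}.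
Proof.
move=> Pm xm; have [W [[oW Wx] _ _ c _]] := window Pm xm.
by move: c; rewrite continuous_open_subspace // => /(_ x (mem_set Wx)).
Qed.

Lemma preim_open m B : sP A m -> open B ->
  open (U_ A m `&` [set a | B (act A a m)]).
Proof.
move=> Pm oB; rewrite openE => a [Ua Ba].
have [W [[oW Wa] WU _ _ _]] := window Pm Ua.
have nB : nbhs a [set x | B (act A x m)].
  exact: (cont_at Pm Ua) (open_nbhs_nbhs (conj oB Ba)).
have nW : nbhs a W := open_nbhs_nbhs (conj oW Wa).
by apply: filterS (filterI nW nB) => y [/WU ? ?].
Qed.

Lemma openU m : sP A m -> open (U_ A m).
Proof. by move=> Pm; case: hlc => _ _ /(_ m Pm) []. Qed.

Definition ZP (U : set X) m n (V : set X) := [/\ open U, open V, sP A m & sP A n].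

Lemma Zsub U m n V U' V' : U' `<=` U -> V' `<=` V ->
  Zset GQ A U' m n V' `<=` Zset GQ A U m n V.
Proof. by move=> sU sV g [[/sU ? /sV ?] ? ? ? ?]. Qed.

Lemma Zdown (g : G) U1 m1 n1 V1 p : ZP U1 m1 n1 V1 -> sP A p ->
  Zset GQ A U1 m1 n1 V1 g -> adom A (gx g) (m1 ** p) ->
  exists U V, [/\ open U, open V, U (gx g), V (gy g) &
    Zset GQ A U (m1 ** p) (n1 ** p) V `<=` Zset GQ A U1 m1 n1 V1].
Proof.
move=> [oU1 oV1 Pm Pn] Pp [[Ux Vy] hq ax ay heq] axp.
have [_ zp] := (adomM Pm Pp).1 axp.
have [W [[oW Wz] WU inj _ _]] := window Pp zp.
exists (U1 `&` (U_ A m1 `&` [set a | W (act A a m1)])),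
       (V1 `&` (U_ A n1 `&` [set b | W (act A b n1)])); split.
- by apply: openI => //; apply: preim_open.
- by apply: openI => //; apply: preim_open.
- by split.
- by split => //; split => //=; rewrite -heq.
move=> h [[[U1h [m1h W1]] [V1h [n1h W2]]] hq' hm hn heq'].
split => //; first by rewrite hq' mul_sinv.
apply: inj; rewrite ?inE //.
by rewrite actM // actM // (adomM Pn Pp).2.
Qed.


Arguments Zdown {g U1 m1 n1 V1 p}.

Lemma Zint (g : G) U1 m1 n1 V1 U2 m2 n2 V2 :
  ZP U1 m1 n1 V1 -> ZP U2 m2 n2 V2 ->
  Zset GQ A U1 m1 n1 V1 g -> Zset GQ A U2 m2 n2 V2 g ->
  exists s U V, [/\ sP A s, open U, open V, U (gx g) & V (gy g)] /\
    adom A (gx g) (m1 ** s) /\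
    Zset GQ A U (m1 ** s) (n1 ** s) V `<=`
      Zset GQ A U1 m1 n1 V1 `&` Zset GQ A U2 m2 n2 V2.
Proof.
move=> Z1 Z2 H1 H2.
have [_ _ Pm1 Pn1] := Z1; have [_ _ Pm2 Pn2] := Z2.
have [_ hq1 ax1 _ _] := H1; have [_ hq2 ax2 _ _] := H2.
have [r [Pr [p1 Pp1 r1] [p2 Pp2 r2] Ur]] := hdir _ _ Pm1 Pm2 (ex_intro _ (gx g) (conj ax1 ax2)).
have axr : U_ A r (gx g) by rewrite -Ur.
have ax1p : adom A (gx g) (m1 ** p1) by rewrite -r1.
have ax2p : adom A (gx g) (m2 ** p2) by rewrite -r2.
have [U [V [oU oV Ux Vy sub1]]] := Zdown Z1 Pp1 H1 ax1p.
have [U' [V' [oU' oV' Ux' Vy' sub2]]] := Zdown Z2 Pp2 H2 ax2p.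
have en : n1 ** p1 = n2 ** p2.
  by rewrite (q_n hq1) (q_n hq2) -!gmulA -r1 -r2 hq2.
exists p1, (U `&` U'), (V `&` V'); split; first by split => //; apply: openI.
split; first by rewrite -r1.
move=> h hZ; split.
  by apply: sub1; apply: Zsub hZ => ? [].
by apply: sub2; rewrite -r2 -en r1; apply: Zsub hZ => ? [].
Qed.

Arguments Zint {g U1 m1 n1 V1 U2 m2 n2 V2}.

Lemma Zopen U m n V : ZP U m n V -> open (Zset GQ A U m n V : set G).
Proof.
move=> [oU oV Pm Pn]; rewrite /open /=.
exists [set Zset GQ A U m n V].
  move=> i -> /=; apply: finI_from1; by exists U, m, n, V.
by rewrite bigcup_set1.
Qed.

Lemma ginG (g : G) : inG GQ A (gx g) (gq g) (gy g).
Proof. exact: gin. Qed.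

Arguments Zopen {U m n V}.

Lemma Zbasis_iter (g : G) k (B : set G) :
  filterI_iter (id @` Zsets GQ A) k B -> B g ->
  exists U m n V, [/\ ZP U m n V, Zset GQ A U m n V g &
                      Zset GQ A U m n V `<=` B].
Proof.
elim: k B => [|k IH] i.
  case => [->|[Z [U [m [n [V [oU oV Pm Pn ->]]]]] <-]] Zg.
    have [m [n [[Pm Pn] hq xm yn heq]]] := ginG g.
    by exists setT, m, n, setT; split => //; split => //; apply: openT.
  by exists U, m, n, V; split.
case=> P Pk [R Rk <-] [Pg Rg].
have [U1 [m1 [n1 [V1 [Z1 H1 S1]]]]] := IH P Pk Pg.
have [U2 [m2 [n2 [V2 [Z2 H2 S2]]]]] := IH R Rk Rg.
have [s [U [V [[Ps oU oV Ux Vy] [axs sub]]]]] := Zint Z1 Z2 H1 H2.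
have [_ _ Pm1 Pn1] := Z1.
have [_ hq _ yn heq] := H1.
have yns : adom A (gy g) (n1 ** s).
  by apply/(adomM Pn1 Ps); split => //; rewrite -heq; case: ((adomM Pm1 Ps).1 axs).
exists U, (m1 ** s), (n1 ** s), V; split.
- by split => //; apply: PM.
- split => //; first by rewrite hq mul_sinv.
  by rewrite -!actM // heq.
- by move=> h /sub [/S1 ? /S2 ?].
Qed.

Arguments Zbasis_iter {g k B}.

Lemma Zbasis (O : set G) g : open O -> O g ->
  exists U m n V, [/\ ZP U m n V, Zset GQ A U m n V g &
                      Zset GQ A U m n V `<=` O].
Proof.
rewrite /open /= => -[D' sD' <-] [i D'i ig].
have := sD' _ D'i; rewrite /= filterI_iter_finI => -[k _ ik].
have [U [m [n [V [ZPh Zg Zi]]]]] := @Zbasis_iter g k i ik ig.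
by exists U, m, n, V; split => // h /Zi ih; exists i.
Qed.


Lemma gelt_eq (g h : G) : gx g = gx h -> gq g = gq h -> gy g = gy h -> g = h.
Proof.
case: g => x q y p; case: h => x' q' y' p' /= ex eq ey.
subst; congr GElt; exact: Prop_irrelevance.
Qed.

Lemma mul_inG (g h : G) : gy g = gx h ->
  inG GQ A (gx g) (gq g ** gq h) (gy h).
Proof.
move=> c.
have [m1 [n1 [[Pm1 Pn1] hq1 xm1 yn1 e1]]] := ginG g.
have [m2 [n2 [[Pm2 Pn2] hq2 ym2 zn2 e2]]] := ginG h.
rewrite -c in ym2 e2.
have [r [Pr [p1 Pp1 r1] [p2 Pp2 r2] Ur]] :=
  hdir _ _ Pn1 Pm2 (ex_intro _ (gy g) (conj yn1 ym2)).
have yr : U_ A r (gy g) by rewrite -Ur.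
have yr1 : adom A (gy g) (n1 ** p1) by rewrite -r1.
have yr2 : adom A (gy g) (m2 ** p2) by rewrite -r2.
have xr : adom A (gx g) (m1 ** p1).
  by apply/(adomM Pm1 Pp1); split => //; rewrite e1; case: ((adomM Pn1 Pp1).1 yr1).
have zr : adom A (gy h) (n2 ** p2).
  by apply/(adomM Pn2 Pp2); split => //; rewrite -e2; case: ((adomM Pm2 Pp2).1 yr2).
exists (m1 ** p1), (n2 ** p2); split.
- by split; apply: PM.
- have ep1 : p1 = iv n1 ** (m2 ** p2) by rewrite -r2 r1 gKg.
  by rewrite hq1 hq2 ep1 ginvM !gmulA ggK.
- done.
- done.
- by rewrite -!actM // e1 actM // -r1 r2 -actM // e2 actM.
Qed.

Lemma inv_inG (g : G) : inG GQ A (gy g) (iv (gq g)) (gx g).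
Proof.
have [m [n [[Pm Pn] hq xm yn e1]]] := ginG g.
by exists n, m; split => //; rewrite hq ginvM ginvK.
Qed.

Section Ops.
Variables (g h : G).
Hypothesis c : gpd_comp GQ A g h.
Lemma mul_x : gx (gpd_mul GQ A g h) = gx g.
Proof. by rewrite /gpd_mul; case: pselect => // -[]; apply: mul_inG. Qed.
Lemma mul_q : gq (gpd_mul GQ A g h) = gq g ** gq h.
Proof. by rewrite /gpd_mul; case: pselect => // -[]; apply: mul_inG. Qed.
Lemma mul_y : gy (gpd_mul GQ A g h) = gy h.
Proof. by rewrite /gpd_mul; case: pselect => // -[]; apply: mul_inG. Qed.
End Ops.

Lemma inv_x g : gx (gpd_inv GQ A g) = gy g.
Proof. by rewrite /gpd_inv; case: pselect => // -[]; apply: inv_inG. Qed.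
Lemma inv_q g : gq (gpd_inv GQ A g) = iv (gq g).
Proof. by rewrite /gpd_inv; case: pselect => // -[]; apply: inv_inG. Qed.
Lemma inv_y g : gy (gpd_inv GQ A g) = gx g.
Proof. by rewrite /gpd_inv; case: pselect => // -[]; apply: inv_inG. Qed.

Lemma groupoid_ok : is_groupoid (gpd_comp GQ A) (gpd_mul GQ A) (gpd_inv GQ A).
Proof.
rewrite /gpd_comp; split.
- move=> g h k c1 c2.
  have c3 : gy (gpd_mul GQ A g h) = gx k by rewrite mul_y.
  have c4 : gy g = gx (gpd_mul GQ A h k) by rewrite mul_x.
  split => //; apply: gelt_eq.
  + by rewrite !mul_x.
  + by rewrite !mul_q // gmulA.
  + by rewrite !mul_y.
- move=> g; apply: gelt_eq. rewrite inv_x inv_y //. rewrite !inv_q ginvK //. rewrite inv_y inv_x //.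
- by move=> g; rewrite inv_x.
- move=> g h c.
  have c1 : gy (gpd_inv GQ A g) = gx (gpd_mul GQ A g h) by rewrite inv_y mul_x.
  have c2 : gy (gpd_mul GQ A g h) = gx (gpd_inv GQ A h) by rewrite mul_y // inv_x.
  split; apply: gelt_eq.
  + by rewrite mul_x // inv_x.
  + by rewrite mul_q // mul_q // inv_q gKg.
  + by rewrite mul_y // mul_y.
  + by rewrite mul_x // mul_x.
  + by rewrite mul_q // mul_q // inv_q ggK.
  + by rewrite mul_y // inv_y.
Qed.


Arguments Zbasis {O g}.

Lemma sepX (a b : X) : a <> b -> exists U V : set X,
  [/\ open U, open V, U a, V b & forall z, U z -> V z -> False].
Proof.
move=> nab; have [hX _ _] := hlc.
move: hX; rewrite open_hausdorff => /(_ a b) [].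
  by apply/eqP.
move=> [U V] /= [aU bV] [oU oV /eqP UV].
exists U, V; split; [by []|by []|exact: set_mem aU|exact: set_mem bV|].
by move=> z Uz Vz; have : (U `&` V) z by []; rewrite UV.
Qed.

Arguments sepX {a b}.

Lemma Zof (g : G) : exists m n, [/\ sP A m, sP A n &
  forall U V, U (gx g) -> V (gy g) -> Zset GQ A U m n V g].
Proof.
have [m [n [[Pm Pn] hq xm yn he]]] := ginG g.
by exists m, n; split => // U V Ux Vy; split.
Qed.

Lemma ZofP (g : G) : exists m n, ZP setT m n setT /\ Zset GQ A setT m n setT g.
Proof.
have [m [n [Pm Pn H]]] := Zof g.
by exists m, n; split; [split => //; apply: openT| apply: H].
Qed.

Lemma Znbhs (g : G) U m n V : ZP U m n V -> Zset GQ A U m n V g ->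
  nbhs g (Zset GQ A U m n V).
Proof. by move=> zp zg; apply: open_nbhs_nbhs; split => //; apply: Zopen. Qed.

Arguments Znbhs {g U m n V}.

Lemma G_hausdorff : hausdorff_space G.
Proof.
rewrite open_hausdorff => g h /eqP ngh.
have [m1 [n1 [P1 P1' Hg]]] := Zof g.
have [m2 [n2 [P2 P2' Hh]]] := Zof h.
have key : exists U1 V1 U2 V2, [/\ open U1, open V1, open U2 & open V2] /\
    (Zset GQ A U1 m1 n1 V1 g /\ Zset GQ A U2 m2 n2 V2 h) /\
    (forall k, Zset GQ A U1 m1 n1 V1 k -> Zset GQ A U2 m2 n2 V2 k -> False).
{ have oT := @openT X.
have [ex|nx] := pselect (gx g = gx h); last first.
  have [U [V [oU oV Ug Vh dUV]]] := sepX nx.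
  exists U, setT, V, setT; split => //; split; first by split; [apply: Hg|apply: Hh].
  by move=> k [[Uk _] _ _ _ _] [[Vk _] _ _ _ _]; apply: dUV Uk Vk.
have [ey|ny] := pselect (gy g = gy h); last first.
  have [U [V [oU oV Ug Vh dUV]]] := sepX ny.
  exists setT, U, setT, V; split => //; split; first by split; [apply: Hg|apply: Hh].
  by move=> k [[_ Uk] _ _ _ _] [[_ Vk] _ _ _ _]; apply: dUV Uk Vk.
have [eq|nq] := pselect (gq g = gq h); last first.
  exists setT, setT, setT, setT; split => //; split; first by split; [apply: Hg|apply: Hh].
  move=> k [_ q1 _ _ _] [_ q2 _ _ _]; apply: nq.
  by have [_ -> _ _ _] := Hg setT setT I I; have [_ -> _ _ _] := Hh setT setT I I; rewrite -q1 -q2.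
by exfalso; apply: ngh; apply: gelt_eq.
}
move: key => [U1 [V1 [U2 [V2 [[oU1 oV1 oU2 oV2] [[g1 h2] dis]]]]]].
exists (Zset GQ A U1 m1 n1 V1, Zset GQ A U2 m2 n2 V2) => /=.
  by split; apply: mem_set.
split; [exact: (Zopen (And4 oU1 oV1 P1 P1'))|exact: (Zopen (And4 oU2 oV2 P2 P2'))|].
by apply/eqP; rewrite -subset0 => k [] /dis H /H.
Qed.

Lemma cocycle_open (q : Q) : open (cocycle GQ A @^-1` [set q]).
Proof.
rewrite openE => g /= hg.
have [m [n [zp zg]]] := ZofP g.
apply: filterS (Znbhs zp zg) => k [_ kq _ _ _].
have [_ gq' _ _ _] := zg.
by rewrite /preimage /cocycle /= kq -gq'.
Qed.

Lemma contG_at (T : topologicalType) (f : T -> G) t :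
  (forall U m n V, ZP U m n V -> Zset GQ A U m n V (f t) ->
     nbhs t (f @^-1` Zset GQ A U m n V)) -> {for t, continuous f}.
Proof.
move=> H B; rewrite /= nbhsE => -[O [oO Oft] OB].
have [U [m [n [V [zp zf zs]]]]] := Zbasis oO Oft.
by apply: filterS (H _ _ _ _ zp zf) => s /zs /OB.
Qed.

Lemma inv_cont : continuous (gpd_inv GQ A).
Proof.
move=> g; apply: contG_at => U m n V [oU oV Pm Pn].
rewrite /Zset /= inv_x inv_y inv_q => -[[Uy Vx] hq ym xn he].
have hq' : gq g = n ** iv m by rewrite -[gq g](ginvK GQ) hq ginvM ginvK.
apply: filterS (@Znbhs g V n m U (And4 oV oU Pn Pm) _).
  move=> k [[Vk Uk] kq kn km ke]; rewrite /= inv_x inv_y inv_q.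
  by split => //; rewrite kq ginvM ginvK.
by split.
Qed.


Lemma compose_core x y z m1 n1 m2 n2 t t' :
  sP A m1 -> sP A n1 -> sP A m2 -> sP A n2 -> sP A t -> sP A t' ->
  adom A x m1 -> adom A y n1 -> act A x m1 = act A y n1 ->
  adom A y m2 -> adom A z n2 -> act A y m2 = act A z n2 ->
  n1 ** t = m2 ** t' -> adom A y (n1 ** t) ->
  [/\ adom A x (m1 ** t), adom A z (n2 ** t') &
      act A x (m1 ** t) = act A z (n2 ** t')].
Proof.
move=> Pm1 Pn1 Pm2 Pn2 Pt Pt' xm1 yn1 e1 ym2 zn2 e2 ee yr.
have yr' : adom A y (m2 ** t') by rewrite -ee.
have xr : adom A x (m1 ** t).
  by apply/(adomM Pm1 Pt); split => //; rewrite e1; case: ((adomM Pn1 Pt).1 yr).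
have zr : adom A z (n2 ** t').
  by apply/(adomM Pn2 Pt'); split => //; rewrite -e2; case: ((adomM Pm2 Pt').1 yr').
split => //.
by rewrite -!actM // e1 actM // ee -actM // e2.
Qed.

Arguments compose_core {x y z m1 n1 m2 n2 t t'}.

Lemma qcomp m1 n1 m2 n2 t t' : n1 ** t = m2 ** t' ->
  (m1 ** iv n1) ** (m2 ** iv n2) = (m1 ** t) ** iv (n2 ** t').
Proof.
move=> ee; have -> : t = iv n1 ** (m2 ** t') by rewrite -ee gKg.
by rewrite ginvM !gmulA ggK.
Qed.

Arguments qcomp {m1 n1 m2 n2 t t'}.

Lemma mul_cont : {within [set p : G * G | gpd_comp GQ A p.1 p.2],
  continuous (fun p => gpd_mul GQ A p.1 p.2)}.
Proof.
apply/subspace_continuousP => -[g h] /= c B.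
rewrite /= nbhsE => -[O [oO Oft] OB].
have [U [m [n [V [zp zf zs]]]]] := Zbasis oO Oft.
rewrite /from_subspace /= in zf.
suff key : nbhs ((g, h) : G * G) [set p : G * G |
   gpd_comp GQ A p.1 p.2 -> Zset GQ A U m n V (gpd_mul GQ A p.1 p.2)].
  by apply: filterS key => p /= H Cp; apply/OB/zs/H.
have [m1 [n1 [Pm1 Pn1 Hg]]] := Zof g.
have [m2 [n2 [Pm2 Pn2 Hh]]] := Zof h.
have [_ hq1 xm1 yn1 e1] := Hg setT setT I I.
have [_ hq2 ym2 zn2 e2] := Hh setT setT I I.
rewrite -c in ym2 e2.
have [r0 [Pr0 [p1 Pp1 r1] [p2 Pp2 r2] Ur]] :=
  hdir _ _ Pn1 Pm2 (ex_intro _ (gy g) (conj yn1 ym2)).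
have yr : U_ A r0 (gy g) by rewrite -Ur.
have ee : n1 ** p1 = m2 ** p2 by rewrite -r1 -r2.
have yr1 : adom A (gy g) (n1 ** p1) by rewrite -r1.
have [xM zN eMN] := compose_core Pm1 Pn1 Pm2 Pn2 Pp1 Pp2 xm1 yn1 e1 ym2 zn2 e2 ee yr1.
have PM0 : sP A (m1 ** p1) by apply: PM.
have PN0 : sP A (n2 ** p2) by apply: PM.
have Z0 : Zset GQ A setT (m1 ** p1) (n2 ** p2) setT (gpd_mul GQ A g h).
  split; rewrite ?mul_x ?mul_y ?mul_q //.
  by rewrite hq1 hq2; apply: qcomp.
have ZP0 : ZP setT (m1 ** p1) (n2 ** p2) setT by split => //; apply: openT.
have [s [U' [V' [[Ps oU' oV' U'x V'y] [axs sub]]]]] := Zint ZP0 zp Z0 zf.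
rewrite mul_x // in U'x axs; rewrite mul_y // in V'y.
set t := p1 ** s; set t' := p2 ** s; set R := r0 ** s.
have Pt : sP A t by apply: PM.
have Pt' : sP A t' by apply: PM.
have PR : sP A R by apply: PM.
have eR1 : n1 ** t = R by rewrite /t /R gmulA -r1.
have eR2 : m2 ** t' = R by rewrite /t' /R gmulA -r2.
have yR : adom A (gy g) R.
  apply/(adomM Pr0 Ps); split => //.
  rewrite r1 -actM // -e1 actM //.
  by case: ((adomM PM0 Ps).1 axs).
exists (Zset GQ A U' m1 n1 (U_ A R), Zset GQ A setT m2 n2 V').
  split.
  - apply: Znbhs; first by split => //; exact: openU.
    by apply: Hg.
  - apply: Znbhs; first by split => //; apply: openT.
    by apply: Hh; rewrite -?c.
move=> [g' h'] /= [[[U'g' Rg'] q1 g'm g'n e1'] [[_ V'h'] q2 h'm h'n e2']] c'.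
suff : Zset GQ A U' (m1 ** p1 ** s) (n2 ** p2 ** s) V' (gpd_mul GQ A g' h').
  by move/sub => [].
rewrite -c' in h'm e2'.
have yR' : adom A (gy g') (n1 ** t) by rewrite eR1.
have ett : n1 ** t = m2 ** t' by rewrite eR1 eR2.
have [xM' zN' eMN'] := compose_core Pm1 Pn1 Pm2 Pn2 Pt Pt' g'm g'n e1' h'm h'n e2' ett yR'.
rewrite -!gmulA; split; rewrite ?mul_x ?mul_y ?mul_q //.
by rewrite q1 q2 (qcomp ett).
Qed.


Definition slice_ok m n (W : set X) := [/\ sP A m, sP A n, open W, W `<=` U_ A n &
  ((forall b b', W b -> W b' -> act A b n = act A b' n -> b = b') /\
  (forall O, open O -> O `<=` W -> open ((fun b => act A b n) @` O)))].

Section Slice.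
Variables (m n : Q) (W : set X) (g0 : G).
Hypothesis hs : slice_ok m n W.
Let Pm : sP A m. Proof. by case: hs. Qed.
Let Pn : sP A n. Proof. by case: hs. Qed.
Let oW : open W. Proof. by case: hs. Qed.
Let WU : W `<=` U_ A n. Proof. by case: hs. Qed.
Let Winj : forall b b', W b -> W b' -> act A b n = act A b' n -> b = b'.
Proof. by case: hs => _ _ _ _ []. Qed.
Let Wopen : forall O, open O -> O `<=` W -> open ((fun b => act A b n) @` O).
Proof. by case: hs => _ _ _ _ []. Qed.

Definition Dsl := U_ A m `&` [set a | ((fun b => act A b n) @` W) (act A a m)].

Lemma Dsl_open : open Dsl.
Proof. by apply: preim_open => //; apply: Wopen. Qed.

Definition psi (a : X) : X :=
  match pselect (exists b, W b /\ act A b n = act A a m) with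
  | left H => proj1_sig (cid H)
  | right _ => a
  end.

Lemma psiP {a} : Dsl a -> W (psi a) /\ act A (psi a) n = act A a m.
Proof.
move=> [am [b Wb be]]; rewrite /psi; case: pselect => [H|[]].
  exact: proj2_sig (cid H).
by exists b.
Qed.

Lemma psi_uniq {a b} : Dsl a -> W b -> act A b n = act A a m -> psi a = b.
Proof.
move=> Da Wb be; have [Wp pe] := psiP Da.
by apply: Winj => //; rewrite pe be.
Qed.

Lemma phi_inG a : Dsl a -> inG GQ A a (m ** iv n) (psi a).
Proof.
move=> Da; have [Wp pe] := psiP Da.
exists m, n; split => //; first by case: Da.
exact: WU.
Qed.

Definition phi (a : X) : G :=
  match pselect (inG GQ A a (m ** iv n) (psi a)) with
  | left H => GElt H
  | right _ => g0
  end.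

Lemma phi_x a : Dsl a -> gx (phi a) = a.
Proof. by move=> Da; rewrite /phi; case: pselect => // -[]; apply: phi_inG. Qed.
Lemma phi_q a : Dsl a -> gq (phi a) = m ** iv n.
Proof. by move=> Da; rewrite /phi; case: pselect => // -[]; apply: phi_inG. Qed.
Lemma phi_y a : Dsl a -> gy (phi a) = psi a.
Proof. by move=> Da; rewrite /phi; case: pselect => // -[]; apply: phi_inG. Qed.

Lemma phi_Z {a} : Dsl a -> Zset GQ A Dsl m n W (phi a).
Proof.
move=> Da; have [Wp pe] := psiP Da.
rewrite /Zset /= phi_x // phi_y // phi_q //; split => //.
- by case: Da.
- exact: WU.
Qed.

Lemma phi_onto (h : G) : Zset GQ A Dsl m n W h -> h = phi (gx h).
Proof.
move=> [[Dh Wh] hq hm hn he]; apply: gelt_eq.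
- by rewrite phi_x.
- by rewrite phi_q.
- by rewrite phi_y // (psi_uniq Dh Wh).
Qed.

Lemma phi_cont a : Dsl a -> {for a, continuous phi}.
Proof.
move=> Da; apply: contG_at => U2 m2 n2 V2 z2 Z2.
have ZPD : ZP Dsl m n W by split => //; apply: Dsl_open.
have [s [U [V [[Ps oU oV Ua Vp] [ams sub]]]]] := Zint ZPD z2 (phi_Z Da) Z2.
rewrite phi_x // in Ua ams; rewrite phi_y // in Vp.
have PMs : sP A (m ** s) by apply: PM.
have PNs : sP A (n ** s) by apply: PM.
set N := U `&` (U_ A (m ** s) `&` (Dsl `&`
   (U_ A m `&` [set a' | ((fun b => act A b n) @` (V `&` W)) (act A a' m)]))).
have oN : open N.
  apply: openI => //; apply: openI; first exact: openU.
  apply: openI; first exact: Dsl_open.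
  apply: preim_open => //; apply: Wopen; [exact: openI|by move=> ? []].
have [Wp pe] := psiP Da.
have Na : N a.
  split => //; split => //; split => //; split; first by case: Da.
  by exists (psi a).
apply: filterS (open_nbhs_nbhs (conj oN Na)) => a' [U'a [ms' [Da' [_ [b [Vb Wb] be]]]]].
have pb := psi_uniq Da' Wb be.
have [Wp' pe'] := psiP Da'.
have [_ sm] := (adomM Pm Ps).1 ms'.
suff H : Zset GQ A U (m ** s) (n ** s) V (phi a') by case: (sub _ H).
rewrite /Zset /= phi_x // phi_y // phi_q // pb.
split => //.
- by rewrite mul_sinv.
- by apply/(adomM Pn Ps); split; [exact: WU|rewrite be].
- by rewrite -!actM //; [rewrite be | apply/(adomM Pn Ps); split; [exact: WU|rewrite be]].
Qed.

End Slice.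


Lemma window_slice m n y (V : set X) : sP A m -> sP A n -> adom A y n ->
  open V -> V y -> exists W, [/\ slice_ok m n W, W y & W `<=` V].
Proof.
move=> Pm Pn yn oV Vy.
have [W0 [[oW0 W0y] W0U inj _ om]] := window Pn yn.
exists (W0 `&` V); split => //.
split => //.
- exact: openI.
- by move=> b [/W0U].
- split.
  + by move=> b b' [Wb _] [Wb' _] be; apply: inj; rewrite ?inE.
  + by move=> O oO OW; apply: om => // b /OW [].
Qed.

Arguments window_slice {m n y V}.

Lemma gx_open (O : set G) : open O -> open (gx @` O).
Proof.
move=> oO; rewrite openE => _ [h Oh <-].
have [U2 [m2 [n2 [V2 [[oU2 oV2 Pm2 Pn2] Zh sub]]]]] := Zbasis oO Oh.
have [[U2x V2y] hq xm yn he] := Zh.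
have [W [hs Wy WV]] := window_slice Pm2 Pn2 yn oV2 V2y.
have Dx : Dsl m2 n2 W (gx h) by split => //; exists (gy h).
have oD : open (Dsl m2 n2 W `&` U2) by apply: openI => //; apply: Dsl_open.
apply: filterS (open_nbhs_nbhs (conj oD (conj Dx U2x))) => a [Da U2a].
exists (phi m2 n2 W h a); last exact: phi_x.
apply: sub.
have [[_ Wy'] q am yn' e'] := phi_Z _ _ _ h hs Da.
by split => //; split; [rewrite phi_x|apply: WV].
Qed.

Lemma shrink (D : set X) x : open D -> D x ->
  exists K, [/\ compact K, K `<=` D & nbhs x K].
Proof.
move=> oD Dx; have [hX lcX _] := hlc.
have [V nV [cV clV]] := lcX x I.
have nV' : nbhs x V by move: nV; rewrite withinET.
have reg := compact_regular hX cV nV'.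
have nDV : nbhs x (D `&` V).
  by apply: filterI => //; apply: open_nbhs_nbhs.
have [C nC clC] := reg _ nDV.
exists (closure C); split.
- apply: (@subclosed_compact X (closure C) V); [exact: closed_closure|exact: cV|].
  by move=> z /clC [].
- by move=> z /clC [].
- by apply: filterS nC; apply: subset_closure.
Qed.

Arguments shrink {D x}.

Lemma G_lc : locally_compact [set: G].
Proof.
move=> g _.
have [m [n [[Pm Pn] hq xm yn he]]] := ginG g.
have [W [hs Wy _]] := window_slice Pm Pn yn (@openT X) I.
have Dx : Dsl m n W (gx g) by split => //; exists (gy g).
have [K [cK KD nK]] := shrink (Dsl_open _ _ _ hs) Dx.
have [O' [oO' O'x] O'K] : exists2 O', open_nbhs (gx g) O' & O' `<=` K.
  by move: nK; rewrite nbhsE.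
have oW : open W by case: hs.
have nC : nbhs g (phi m n W g @` K).
  apply: filterS (@Znbhs g O' m n W (And4 oO' oW Pm Pn) _); last by split.
  move=> h hZ; exists (gx h); first by case: hZ => -[/O'K].
  apply/esym/(phi_onto _ _ _ g hs).
  by apply: Zsub hZ => // z /O'K /KD.
exists (phi m n W g @` K).
  by rewrite withinET.
have cC : compact (phi m n W g @` K).
  apply: continuous_compact => //.
  apply: continuous_in_subspaceT => a /set_mem Ka.
  by apply: phi_cont => //; apply: KD.
by split => //; apply: compact_closed => //; apply: G_hausdorff.
Qed.

Local Notation r := (fun g : G => gpd_mul GQ A g (gpd_inv GQ A g)).

Lemma r_comp (g : G) : gpd_comp GQ A g (gpd_inv GQ A g).
Proof. by rewrite /gpd_comp inv_x. Qed.
Lemma r_x (g : G) : gx (r g) = gx g.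
Proof. by rewrite /= mul_x //; apply: r_comp. Qed.
Lemma r_q (g : G) : gq (r g) = e.
Proof. by rewrite /= mul_q ?inv_q ?gmulVr //; apply: r_comp. Qed.
Lemma r_y (g : G) : gy (r g) = gx g.
Proof. by rewrite /= mul_y ?inv_y //; apply: r_comp. Qed.

Lemma r_cont : continuous r.
Proof.
move=> g; apply: contG_at => U2 m2 n2 V2 [oU2 oV2 Pm2 Pn2].
rewrite /Zset /= -/(r g) r_x r_y r_q => -[[U2x V2x] hq xm xn _].
have em := mul_inv_e (esym hq); subst n2.
have [m1 [n1 [Pm1 Pn1 Hg]]] := Zof g.
have oU : open (U2 `&` V2 `&` U_ A m2) by apply: openI; [apply: openI|apply: openU].
apply: filterS (@Znbhs g _ m1 n1 setT (And4 oU openT Pm1 Pn1) (Hg _ _ _ I)); last first.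
  by split.
move=> k [[[[Uk Vk] km] _] _ _ _ _].
rewrite /preimage /Zset /= -/(r k) r_x r_y r_q.
by split.
Qed.

Lemma r_lh : local_homeo_to (unit_space (gpd_mul GQ A) (gpd_inv GQ A)) r.
Proof.
split; first by move=> g; exists g.
move=> g.
have [m [n [[Pm Pn] hq xm yn he]]] := ginG g.
have [W [hs Wy _]] := window_slice Pm Pn yn (@openT X) I.
have [_ _ oW WU [Winj _]] := hs.
exists (Zset GQ A setT m n W); split.
- by apply: Zopen; split => //; apply: openT.
- by split.
- move=> h1 h2 /set_mem [[_ W1] q1 a1 b1 e1] /set_mem [[_ W2] q2 a2 b2 e2] req.
  have ex : gx h1 = gx h2 by rewrite -(r_x h1) req r_x.
  apply: gelt_eq => //; first by rewrite q1 q2.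
  by apply: Winj => //; rewrite -e1 -e2 ex.
- by apply: continuous_subspaceT; apply: r_cont.
move=> O oO OW.
have oS := @gx_open O oO.
exists (Zset GQ A (gx @` O) e e (gx @` O)).
  by apply: Zopen; split => //; apply: Pe.
rewrite eqEsubset; split.
  move=> _ [h Oh <-]; split; last by exists h.
  rewrite /Zset /= -/(r h) r_x r_y r_q; split.
  + by split; exists h.
  + by rewrite ginv1 gmul1r.
  + exact: adom1.
  + exact: adom1.
  + by [].
move=> k [[[[h Oh hk] _] kq _ _ ke] _].
exists h => //; apply: gelt_eq.
- by rewrite r_x.
- by rewrite r_q kq ginv1 gmul1r.
- by rewrite r_y hk; rewrite !act1 in ke.
Qed.

Lemma main_result :
  (forall g h : Gpd GQ A, gpd_comp GQ A g h ->
     inG GQ A (gx g) (gmul GQ (gq g) (gq h)) (gy h)) /\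
  (forall g : Gpd GQ A, inG GQ A (gy g) (ginv GQ (gq g)) (gx g)) /\
  etale_lch_groupoid (gpd_comp GQ A) (gpd_mul GQ A) (gpd_inv GQ A) /\
  (forall q : Q, open (cocycle GQ A @^-1` [set q])).
Proof.
split; first by move=> g h c; apply: mul_inG.
split; first by move=> g; apply: inv_inG.
split; last by move=> q; apply: cocycle_open.
split.
- exact: groupoid_ok.
- by split; [apply: G_hausdorff|apply: G_lc].
- exact: mul_cont.
- exact: inv_cont.
- exact: r_lh.
Qed.

End Main.

Theorem proposition5p12 (X : topologicalType) (Q : Type) (GQ : group_str Q)
    (A : sg_action X Q)
    (hP : subsemigroup_with_e GQ (sP A))
    (hact : is_right_action GQ A)
    (hdir : directed_action GQ A)
    (hlc : lc_action A) :
  (* the groupoid operations land in G(X,P,T) *)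
  (forall g h : Gpd GQ A, gpd_comp GQ A g h ->
     inG GQ A (gx g) (gmul GQ (gq g) (gq h)) (gy h)) /\
  (forall g : Gpd GQ A, inG GQ A (gy g) (ginv GQ (gq g)) (gx g)) /\
  (* (a) étale locally compact Hausdorff groupoid *)
  etale_lch_groupoid (gpd_comp GQ A) (gpd_mul GQ A) (gpd_inv GQ A) /\
  (* (b) the canonical cocycle c(x,q,y) = q is continuous (Q discrete) *)
  (forall q : Q, open (cocycle GQ A @^-1` [set q])).
Proof. exact: main_result. Qed.
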